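(* Consider the excludable public good problem, and let $\mathcal A$ be the VCG-based mechanism with a normalized, monotone, symmetric function $H:2^N\to\mathbb{R}_{\ge0}$. Suppose that $\mathcal A$ always covers the incurred cost and is a $\rho$-approximation to the social cost for some finite $\rho$. Then for every nonempty $S\subseteq N$ and every $i\in S$, $H(S)-H(S\setminus\{i\})\ge\frac1{|S|}$.
   Context: Excludable public good problem: players $N=\{1,\dots,n\}$, each player $i$ has a private value $v_i\ge0$ for being served; an outcome is a set $S\subseteq N$ of served players; the cost is $C(S)=1$ for $S\ne\emptyset$ and $C(\emptyset)=0$. $H$ is normalized if $H(\emptyset)=0$, monotone if $S\subseteq T\Rightarrow H(S)\le H(T)$, symmetric if $H(S)=H(T)$ whenever $|S|=|T|$. The VCG-based mechanism with $H$ outputs $ALG\in\arg\max_{S\subseteq N}\sum_{i\in S}v_i-H(S)$ (some tie-breaking), for each $i$ computes $ALG^{-i}\in\arg\max_{S\subseteq N\setminus\{i\}}\sum_{j\in S}v_j-H(S)$, and charges $p_i=\left[\sum_{j\in ALG^{-i}}v_j-H(ALG^{-i})\right]-\left[\sum_{j\in ALG\setminus\{i\}}v_j-H(ALG)\right]$. It always covers the cost if $\sum_ip_i\ge C(ALG)$ for every profile. Social cost: $\pi(S)=C(S)+\sum_{i\notin S}v_i$; a $\rho$-approximation means $\pi(ALG)\le\rho\min_T\pi(T)$ on every profile. *)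

(* Defs.v *)
From HB Require Import structures.
From mathcomp Require Import all_boot all_order all_algebra.
Set Implicit Arguments. Unset Strict Implicit. Unset Printing Implicit Defensive.
Import Order.TTheory GRing.Theory Num.Theory.
Local Open Scope ring_scope.

Section Defs.
Variables (R : realFieldType) (n : nat).
Implicit Types (H : {set 'I_n} -> R) (v : 'I_n -> R) (S T : {set 'I_n}).

Definition cost S : R := if S == set0 then 0 else 1.

Definition H_normalized H := H set0 = 0.
Definition H_monotone H := forall S T, S \subset T -> H S <= H T.
Definition H_symmetric H := forall S T, #|S| = #|T| -> H S = H T.
Definition H_nonneg H := forall S, 0 <= H S.

Definition welfare H v S : R := \sum_(j in S) v j - H S.

Definition is_argmax H v (A : {set 'I_n}) := forall S, welfare H v S <= welfare H v A.

Definition is_argmax_minus H v (i : 'I_n) (A : {set 'I_n}) :=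
  i \notin A /\ forall S, i \notin S -> welfare H v S <= welfare H v A.

Definition vcg_payment H v (ALG ALGmi : {set 'I_n}) (i : 'I_n) : R :=
  (\sum_(j in ALGmi) v j - H ALGmi) - (\sum_(j in ALG :\ i) v j - H ALG).

Definition social_cost v S : R := cost S + \sum_(j in ~: S) v j.

Definition opt_social_cost v : R :=
  \big[Num.min/social_cost v set0]_(T : {set 'I_n}) social_cost v T.

Definition profile v := forall i, 0 <= v i.
End Defs.
Arguments cost {R n} S.
Arguments social_cost {R n} v S.
Arguments opt_social_cost {R n} v.

(* Main.v *)
Require Import Defs.
From HB Require Import structures.
From mathcomp Require Import all_boot all_order all_algebra.
From mathcomp Require Import lra zify.
Import Order.TTheory GRing.Theory Num.Theory.
Local Open Scope ring_scope.

Theorem claim5p2 (R : realFieldType) (n : nat) (H : {set 'I_n} -> R)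
  (alg : ('I_n -> R) -> {set 'I_n})
  (algm : 'I_n -> ('I_n -> R) -> {set 'I_n}) (rho : R) :
  H_nonneg H -> H_normalized H -> H_monotone H -> H_symmetric H ->
  (forall v, profile v -> is_argmax H v (alg v)) ->
  (forall v i, profile v -> is_argmax_minus H v i (algm i v)) ->
  (* always covers the cost *)
  (forall v, profile v ->
     cost (alg v) <= \sum_(i < n) vcg_payment H v (alg v) (algm i v) i) ->
  (* rho-approximation to the social cost *)
  (forall v, profile v ->
     social_cost v (alg v) <= rho * opt_social_cost v) ->
  forall S : {set 'I_n}, S != set0 ->
  forall i, i \in S -> H S - H (S :\ i) >= 1 / (#|S|%:R).
Proof.
move=> Hnn Hnorm Hmon Hsym Harg Hargm Hcov _ S SN0 i iS.
set K := #|S|.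
have K0 : (0 < K)%N by rewrite card_gt0.
set M := H S + 1.
have MM : M = H S + 1 by [].
have HS0 := Hnn S.
set v : 'I_n -> R := fun x => if x \in S then M else 0.
have vp : profile v by move=> x; rewrite /v; case: ifP => _; lra.
have Hsum : forall T : {set 'I_n}, \sum_(x in T) v x = M * #|T :&: S|%:R.
  move=> T; rewrite mulr_natr -sumr_const -big_mkcondr /=.
  by apply: eq_bigl => x; rewrite inE.
have wf : forall T : {set 'I_n}, welfare H v T = M * #|T :&: S|%:R - H T.
  by move=> T; rewrite /welfare Hsum.
set A := alg v.
have wA : M * K%:R - H S <= welfare H v A.
  by have := Harg v vp S; rewrite wf setIid.
have wm : forall j (T : {set 'I_n}), j \in S -> j \notin T ->
    welfare H v T <= M * (K.-1)%:R - H (S :\ i).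
  move=> j T jS jT.
  have eqH : H (S :\ j) = H (S :\ i).
    apply: Hsym; move: (cardsD1 j S) (cardsD1 i S); rewrite jS iS /= => c1 c2.
    by apply/eqP; rewrite -(eqn_add2l 1) -c1 -c2.
  have sub : T :&: S \subset S :\ j.
    apply/subsetP => x; rewrite !inE => /andP[xT ->]; rewrite andbT.
    by apply/eqP => exj; move: jT; rewrite -exj xT.
  have cSj : #|S :\ j| = K.-1 by rewrite /K (cardsD1 j S) jS.
  rewrite wf.
  have HSj : H (S :\ j) <= H S by apply: Hmon; apply: subsetDl.
  case: (boolP (S :\ j \subset T)) => sST.
    have e : T :&: S = S :\ j.
      apply/eqP; rewrite eqEsubset sub /=.
      by rewrite subsetI sST subsetDl.
    rewrite e cSj -eqH.
    have := Hmon _ _ sST; lra.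
  have pr : T :&: S \proper S :\ j.
    rewrite properEneq sub andbT; apply/negP => /eqP e.
    by move: sST; rewrite -e subsetIl.
  have := proper_card pr; rewrite cSj => lt.
  have le : (#|T :&: S|.+1)%:R <= (K.-1)%:R :> R by rewrite ler_nat.
  have := Hnn T; rewrite -natr1 in le.
  have M0 : 0 <= M by lra.
  have := ler_wpM2l M0 le; rewrite mulrDr mulr1 -eqH; lra.
set d := H S - H (S :\ i).
have pay : forall j, vcg_payment H v A (algm j v) j <= if j \in S then d else 0.
  move=> j; rewrite /vcg_payment.
  have sA : \sum_(x in A) v x - v j <= \sum_(x in A :\ j) v x.
    case: (boolP (j \in A)) => jA.
      by rewrite (big_setD1 j jA) /=; lra.
    have -> : A :\ j = A.
      apply/setP => x; rewrite !inE; case: eqP => // ->; by rewrite (negbTE jA).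
    by have := vp j; lra.
  have [jn wmax] := Hargm v j vp.
  move: sA (Harg v vp (algm j v)); rewrite /welfare.
  case: ifP => jS.
    have := wm j _ jS jn; rewrite /welfare.
    have vj : v j = M by rewrite /v jS.
    rewrite vj.
    have : M * K%:R = M * (K.-1)%:R + M.
      by rewrite -{1}(prednK K0) -natr1 mulrDr mulr1.
    move: wA; rewrite /welfare /d; lra.
  have vj : v j = 0 by rewrite /v jS.
  rewrite vj; lra.
have cov := Hcov v vp.
have A0 : A != set0.
  apply/negP => /eqP A0; move: wA; rewrite A0 wf set0I cards0 mulr0 Hnorm.
  have : 1 <= K%:R :> R by rewrite ler1n.
  have M0 : 0 <= M by lra.
  move=> h1; have := ler_wpM2l M0 h1; rewrite mulr1 /M; lra.
have le1 : 1 <= \sum_(j < n) (if j \in S then d else 0).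
  apply: le_trans (ler_sum _ (fun j _ => pay j)).
  by move: cov; rewrite /cost /A (negbTE A0).
move: le1; rewrite -big_mkcond /= sumr_const => le1.
have cE : #|[pred j : 'I_n | j \in S]| = K by apply: eq_card.
have le2 : 1 <= d * K%:R.
  rewrite mulr_natr -cE; exact: le1.
have Kp : 0 < K%:R :> R by rewrite ltr0n.
rewrite ler_pdivrMr // mul1r.
Qed.
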